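(* Let $i,j\in J$ be two jobs with $\varphi_i(0)>\varphi_j(0)$, $w_ip_j\neq w_jp_i$ and $t^*_{ij}\in(0,T)$, and let $S$ be a complete schedule with $t_j\notin[t^*_{ij},t^*_{ij}+p_j)$. (1) If $t_i<t^*_{ij}$ and job $j$ is processed before job $i$ in $S$, then $S$ is not a potential schedule. (2) If $t_i\ge t^*_{ij}+p_j$ and job $i$ is processed before job $j$ in $S$, then $S$ is not a potential schedule.
   Context: $J$ is a finite set of jobs; job $j$ has processing time $p_j>0$ and weight $w_j>0$; $T=\sum_{j\in J}p_j$. A complete schedule is an ordering of $J$ processed consecutively without idle time from time $0$; job $j$ has start time $t_j$. For $t\ge 0$, $\varphi_j(t)=\frac{w_j}{p_j(p_j+t)}$. For jobs $i,j$ with $w_ip_j\neq w_jp_i$, $t^*_{ij}=\frac{w_jp_i^2-w_ip_j^2}{w_ip_j-w_jp_i}$ (the unique real $t$ with $\varphi_i(t)=\varphi_j(t)$). Dominance rule: for an interval $I\subseteq[0,\infty)$, the relation ''$i$ dominates $j$ on $I$'' is violated by a schedule if $j$ is processed before $i$ and both $t_j\in I$ and $t_i-p_j\in I$. The rule contains, for each pair of distinct jobs $i,j$ with $(p_i,w_i)\ne(p_j,w_j)$: (1) if $\varphi_i(t)\ge\varphi_j(t)$ for all $t\ge 0$, ''$i$ dominates $j$ on $[0,\infty)$''; (2) otherwise, if $\varphi_j(t)\ge\varphi_i(t)$ for all $t\ge0$, ''$j$ dominates $i$ on $[0,\infty)$''; (3) otherwise, labelling the pair so that $\varphi_i(0)>\varphi_j(0)$,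 $t^*_{ij}>0$ is defined and the rule contains ''$i$ dominates $j$ on $[0,t^*_{ij})$'' and ''$j$ dominates $i$ on $[t^*_{ij},\infty)$''. A complete schedule is a potential schedule if it violates no relation of the rule. *)

(* Defs.v *)
From HB Require Import structures.
From mathcomp Require Import all_boot all_order all_algebra.
Set Implicit Arguments. Unset Strict Implicit. Unset Printing Implicit Defensive.
Import Order.TTheory GRing.Theory Num.Theory.
Local Open Scope ring_scope.

Section Sched.
Variables (R : realFieldType) (J : finType) (p w : J -> R).

Definition total_time : R := \sum_(j : J) p j.

Definition phi (j : J) (t : R) : R := w j / (p j * (p j + t)).

Definition tstar (i j : J) : R :=
  (w j * p i ^+ 2 - w i * p j ^+ 2) / (w i * p j - w j * p i).

Definition complete_schedule (s : seq J) : Prop := perm_eq s (enum J).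

Definition start (s : seq J) (j : J) : R :=
  \sum_(k <- take (index j s) s) p k.

Definition before (s : seq J) (a b : J) : Prop := (index a s < index b s)%N.

(* The relation "a dominates b on I" is violated by s. *)
Definition violates (s : seq J) (a b : J) (I : R -> Prop) : Prop :=
  before s b a /\ I (start s b) /\ I (start s a - p b).

Inductive rule_contains : J -> J -> (R -> Prop) -> Prop :=
| rule_case1 (i j : J) :
    i <> j -> (p i, w i) <> (p j, w j) ->
    (forall t, 0 <= t -> phi j t <= phi i t) ->
    rule_contains i j (fun t => 0 <= t)
| rule_case2 (i j : J) :
    i <> j -> (p i, w i) <> (p j, w j) ->
    ~ (forall t, 0 <= t -> phi j t <= phi i t) ->
    (forall t, 0 <= t -> phi i t <= phi j t) ->
    rule_contains j i (fun t => 0 <= t)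
| rule_case3a (i j : J) :
    i <> j -> (p i, w i) <> (p j, w j) ->
    ~ (forall t, 0 <= t -> phi j t <= phi i t) ->
    ~ (forall t, 0 <= t -> phi i t <= phi j t) ->
    phi j 0 < phi i 0 ->
    rule_contains i j (fun t => 0 <= t < tstar i j)
| rule_case3b (i j : J) :
    i <> j -> (p i, w i) <> (p j, w j) ->
    ~ (forall t, 0 <= t -> phi j t <= phi i t) ->
    ~ (forall t, 0 <= t -> phi i t <= phi j t) ->
    phi j 0 < phi i 0 ->
    rule_contains j i (fun t => tstar i j <= t).

Definition potential (s : seq J) : Prop :=
  complete_schedule s /\
  forall a b I, rule_contains a b I -> ~ violates s a b I.

End Sched.

(* Main.v *)
Require Import Defs.
From HB Require Import structures.
From mathcomp Require Import all_boot all_order all_algebra.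
From mathcomp Require Import ring lra.
Import Order.TTheory GRing.Theory Num.Theory.
Local Open Scope ring_scope.

Lemma start_ge0 (R : realFieldType) (J : finType) (p : J -> R)
  (hp : forall j, 0 < p j) s a : 0 <= start p s a.
Proof. by rewrite /start; apply: sumr_ge0 => k _; exact: ltW. Qed.

Lemma start_before (R : realFieldType) (J : finType) (p : J -> R)
  (hp : forall j, 0 < p j) s a b :
  (index a s < index b s)%N -> start p s a + p a <= start p s b.
Proof.
move=> hab.
have hsz : (index a s < size s)%N.
  by apply: (leq_trans hab); rewrite index_size.
rewrite /start.
have -> : index b s = ((index a s).+1 + (index b s - (index a s).+1))%N.
  by rewrite subnKC.
rewrite takeD big_cat (take_nth a hsz) nth_index; last by rewrite -index_mem.
rewrite -cats1 big_cat big_seq1 /= lerDl.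
by apply: sumr_ge0 => k _; exact: ltW.
Qed.

Theorem lemma3 (R : realFieldType) (J : finType) (p w : J -> R)
  (hp : forall j, 0 < p j) (hw : forall j, 0 < w j)
  (i j : J) (s : seq J)
  (hphi : phi p w j 0 < phi p w i 0)
  (hne : w i * p j != w j * p i)
  (ht0 : 0 < tstar p w i j) (htT : tstar p w i j < total_time p)
  (hs : complete_schedule s)
  (htj : ~ (tstar p w i j <= start p s j < tstar p w i j + p j)) :
  (start p s i < tstar p w i j -> before s j i -> ~ potential p w s) /\
  (tstar p w i j + p j <= start p s i -> before s i j -> ~ potential p w s).
Proof.
set ts := tstar p w i j.
have ht0' : 0 < ts := ht0.
set D := w i * p j - w j * p i.
have hD0 : D != 0 by rewrite subr_eq0.
have pi0 := hp i; have pj0 := hp j.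
have key : forall t, 0 <= t ->
  (phi p w i t - phi p w j t) * (p i * p j * (p i + t) * (p j + t)) = D * (t - ts).
  move=> t ht.
  rewrite /ts /D /phi /tstar.
  field.
  rewrite hD0 /=.
  have h1 : 0 < p i + t by lra.
  have h2 : 0 < p j + t by lra.
  by rewrite !gt_eqF.
have Qpos : forall t, 0 <= t -> 0 < p i * p j * (p i + t) * (p j + t).
  move=> t ht; apply: mulr_gt0; last by lra.
  apply: mulr_gt0; last by lra.
  exact: mulr_gt0.
have hDneg : D < 0.
  have := key 0 (lexx _); have := Qpos 0 (lexx _).
  move: hphi; set a := phi p w i 0; set b := phi p w j 0; set Q := _ * _ * _ * _.
  move=> h1 h2 h3.
  have : 0 < (a - b) * Q by apply: mulr_gt0; lra.
  by rewrite h3 sub0r mulrN oppr_gt0 pmulr_llt0.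
have sign : forall t, 0 <= t ->
   (phi p w j t <= phi p w i t) = (t <= ts).
  move=> t ht; have := key t ht; have := Qpos t ht.
  set a := phi p w i t; set b := phi p w j t; set Q := _ * _ * _ * _.
  move=> hQ hk.
  apply/idP/idP => h.
  - have : 0 <= (a - b) * Q by apply: mulr_ge0; lra.
    by rewrite hk nmulr_rge0 // subr_le0.
  - have : 0 <= (a - b) * Q by rewrite hk nmulr_rge0 // subr_le0.
    rewrite pmulr_lge0 //; lra.
have hn1 : ~ (forall t, 0 <= t -> phi p w j t <= phi p w i t).
  move=> H; have h0 : 0 <= ts + 1 by lra.
  have := H _ h0; rewrite sign //; lra.
have hn2 : ~ (forall t, 0 <= t -> phi p w i t <= phi p w j t).
  move=> H; have := H 0 (lexx _); lra.
have hij : i <> j by move=> E; move: hphi; rewrite E ltxx.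
have hpw : (p i, w i) <> (p j, w j).
  by move=> [E1 E2]; move: hphi; rewrite /phi E1 E2 ltxx.
split.
- move=> hti hb [_ H].
  apply: (H _ _ _ (rule_case3a hij hpw hn1 hn2 hphi)).
  have := @start_before _ _ _ hp _ _ _ hb; have := @start_ge0 _ _ _ hp s j.
  rewrite /violates; split => //; rewrite -/ts; lra.
- move=> hti hb [_ H].
  apply: (H _ _ _ (rule_case3b hij hpw hn1 hn2 hphi)).
  have := @start_before _ _ _ hp _ _ _ hb; have := @start_ge0 _ _ _ hp s i.
  rewrite /violates; split => //; rewrite -/ts; lra.
Qed.
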